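(* Let $p\geq 3$ and let $\Gamma$ be a $p$-hamiltonian graph in normalized form with vertices $v_1,\dots,v_\gamma$. Suppose $\Gamma$ has chords $d_{1,j}$ and $d_{k,l}$ with $1<j<k<l\leq\gamma$, $j\leq\gamma/2$, $j-1\leq\gamma/2-1$, $l-k<\lfloor\gamma/2\rfloor$, $j-1\leq l-k$ and $k-j\leq\gamma+1-l$. Then $k\leq\lfloor\gamma/2\rfloor+1$, and if $\Gamma'$ is the graph obtained by twisting $(d_{1,j},d_{k,l})$ into $(d_{1,k},d_{j,l})$ (i.e. replacing the chord $v_1v_j$ by a chord $v_1v_k$ and the chord $v_kv_l$ by a chord $v_jv_l$), then $\epsilon(\Gamma')<\epsilon(\Gamma)$, where for a normalized $p$-regular hamiltonian graph $\epsilon(\Gamma)=\sum_{d}\big(\lfloor\gamma/2\rfloor-\alpha(d)\big)$, the sum over all chords $d$.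
   Context: A $p$-hamiltonian graph is a finite connected loopless graph (multiple edges allowed), $p$-regular, with at least 2 vertices, containing a hamiltonian cycle $\Delta$. Normalized form: fix $\Delta$, $\gamma=|V(\Gamma)|$, and label vertices $v_1,\dots,v_\gamma$ so that $\Delta$ consists of edges joining $v_i,v_{i+1}$ (indices mod $\gamma$). Chords are the edges not in $\Delta$; $d_{a,b}$ ($a<b$) denotes a chord joining $v_a$ and $v_b$. Its amplitude is $\alpha(d_{a,b})=\min\{b-a,\gamma-b+a\}$. The graph $\Gamma'$ inherits the labeling and hamiltonian cycle of $\Gamma$. *)

(* Defs.v *)
From mathcomp Require Import all_boot.
Set Implicit Arguments. Unset Strict Implicit. Unset Printing Implicit Defensive.

(* A normalized hamiltonian multigraph: vertices v_1..v_gamma (as nats 1..gamma),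
   hamiltonian cycle Delta = edges v_i v_{i+1} (indices mod gamma), and a finite
   multiset (list) of chords, each chord d_{a,b} given as the pair (a,b) with a<b. *)

Definition chord_ok (gamma : nat) (d : nat * nat) : bool :=
  [&& 1 <= d.1, d.1 < d.2 & d.2 <= gamma].

(* degree of vertex v: 2 from the hamiltonian cycle (gamma >= 2) plus chord ends *)
Definition degree (chords : seq (nat * nat)) (v : nat) : nat :=
  2 + count (fun d => d.1 == v) chords + count (fun d => d.2 == v) chords.

(* Gamma is a p-hamiltonian graph in normalized form: at least 2 vertices,
   loopless chords between labelled vertices, p-regular. Connectedness is
   automatic from the hamiltonian cycle. *)
Definition p_hamiltonian (p gamma : nat) (chords : seq (nat * nat)) : Prop :=
  2 <= gamma /\ all (chord_ok gamma) chords /\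
  (forall v, 1 <= v <= gamma -> degree chords v = p).

Definition amplitude (gamma : nat) (d : nat * nat) : nat :=
  minn (d.2 - d.1) (gamma - d.2 + d.1).

(* epsilon(Gamma) = sum over chords of (floor(gamma/2) - alpha(d)).
   Each summand is nonnegative since alpha(d) <= floor(gamma/2), so nat
   subtraction is exact here. *)
Definition epsilon (gamma : nat) (chords : seq (nat * nat)) : nat :=
  \sum_(d <- chords) (gamma./2 - amplitude gamma d).

Definition twist (j k l : nat) (chords : seq (nat * nat)) : seq (nat * nat) :=
  (1, k) :: (j, l) :: rem (k, l) (rem (1, j) chords).

(* Main.v *)
Require Import Defs.
From Stdlib Require Import Lia.
Lemma hlp : forall m x y z hh, m <= hh -> y + z < x + m -> x <= hh -> z <= hh -> y<=z ->
 hh - x + (hh - m) < hh - y + (hh - z).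
Proof. intros. lia. Qed.
From mathcomp Require Import all_boot.

Lemma amp_eq g a b : amplitude g (a, b) = Nat.min (b - a) (g - b + a).
Proof.
rewrite /amplitude /minn /=; case: ifP => /ltP H.
  lia.
lia.
Qed.

Theorem mainTheorem9 (p gamma : nat) (chords : seq (nat * nat)) (j k l : nat) :
  3 <= p ->
  p_hamiltonian p gamma chords ->
  (1, j) \in chords ->
  (k, l) \in chords ->
  1 < j -> j < k -> k < l -> l <= gamma ->
  j.*2 <= gamma ->
  (j - 1).*2 + 2 <= gamma ->
  l - k < gamma./2 ->
  j - 1 <= l - k ->
  k - j <= gamma + 1 - l ->
  k <= gamma./2 + 1 /\ epsilon gamma (twist j k l chords) < epsilon gamma chords.
Proof.
move=> _ _ H1 H2 Hj Hjk Hkl Hl Hj2 Hj3 Hlk Hjl Hkj.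
have Hg := odd_double_half gamma.
set h := gamma./2 in Hg Hlk *.
rewrite -!addnn in Hj2 Hj3 Hg.
have Ho : odd gamma <= 1 by case: (odd gamma).
move: Hg Ho => /eqP/eqnP Hg /leP Ho.
move/ltP: Hj => Hj; move/ltP: Hjk => Hjk; move/ltP: Hkl => Hkl; move/leP: Hl => Hl.
move/leP: Hj2 => Hj2; move/leP: Hj3 => Hj3; move/ltP: Hlk => Hlk.
move/leP: Hjl => Hjl; move/leP: Hkj => Hkj.
rewrite -?plusE -?minusE in Hg Hj2 Hj3 Hlk Hjl Hkj.
have Hk : k <= h + 1 by apply/leP; rewrite -plusE; lia.
split=> //.
have H2' : (k, l) \in rem (1, j) chords.
  have := perm_mem (perm_to_rem H1) (k, l).
  rewrite H2 in_cons => /esym/orP [/eqP [E _]|//]; lia.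
rewrite /epsilon /twist.
set F := fun d => gamma./2 - amplitude gamma d.
have E : \sum_(d <- chords) F d = F (1, j) + (F (k, l) + \sum_(d <- rem (k, l) (rem (1, j) chords)) F d).
  by rewrite (perm_big _ (perm_to_rem H1)) big_cons (perm_big _ (perm_to_rem H2')) big_cons.
rewrite E !big_cons /F.
have Hk' : (k <= h + 1)%coq_nat by apply/leP.
have A1 : amplitude gamma (1, k) = k - 1.
  rewrite amp_eq /= -?minusE -?plusE; lia.
have A2 : amplitude gamma (1, j) = j - 1 by rewrite amp_eq /= -?minusE -?plusE; lia.
have A3 : amplitude gamma (k, l) = l - k by rewrite amp_eq /= -?minusE -?plusE; lia.
have A4 : amplitude gamma (j, l) <= h by apply/leP; rewrite amp_eq /= -?minusE -?plusE; lia.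
have A5 : k - 1 + amplitude gamma (j, l) > j - 1 + (l - k).
  by apply/ltP; rewrite amp_eq /= -!plusE -!minusE; lia.
have A6 : k - 1 <= h by apply/leP; rewrite -minusE; lia.
have A7 : l - k <= h by apply/leP; rewrite -?minusE; lia.
rewrite A1 A2 A3 !addnA ltn_add2r.
have A8 : j - 1 <= l - k by apply/leP; rewrite -?minusE; lia.
move: A4 A5 A6 A7 A8; rewrite /= -/h.
generalize (amplitude gamma (j, l)) (k - 1) (j - 1) (l - k) h.
move=> m x y z hh /leP Q1 /ltP Q2 /leP Q3 /leP Q4 /leP Q5.
apply/ltP; rewrite -!plusE -!minusE; exact: hlp.
Qed.
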